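(* Let $d\ge1$ and $L\ge2$ be integers, $\Phi\in\mathbb{R}^{d\times d}$, and $W_1,\dots,W_L\in\mathbb{R}^{d\times d}$, with $\mathcal{R}=\tfrac12\|W_{L:1}-\Phi\|_F^2$. Suppose $\|W_l\|_2\le\alpha$ for $l=1,\dots,L-1$ and $\|W_L\|_2\le\beta$, where $\alpha,\beta\ge0$ and, for some $\phi>0$, $1\le\alpha^{2(L-1)}<L\phi^2$ and $\alpha^{2(L-1)}\beta^2<2\phi^2$. Then $$\|\nabla_l\mathcal{R}\|_F^2\le4\phi^2\mathcal{R}\quad(l=1,\dots,L-1),\qquad\|\nabla_L\mathcal{R}\|_F^2\le2L\phi^2\mathcal{R}.$$
   Context: For $l_2\ge l_1$ write $W_{l_2:l_1}=W_{l_2}\cdots W_{l_1}$, empty products being the identity $I$. $\nabla_l\mathcal{R}=W_{L:l+1}^\intercal(W_{L:1}-\Phi)W_{l-1:1}^\intercal$ is the gradient of $\mathcal{R}(W_1,\dots,W_L)=\tfrac12\|W_L\cdots W_1-\Phi\|_F^2$ with respect to $W_l$. $\|\cdot\|_2$ is the spectral norm and $\|\cdot\|_F$ the Frobenius norm. *)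

(* Defs.v *)
From HB Require Import structures.
From mathcomp Require Import all_boot all_order all_algebra.
From mathcomp Require Import all_classical all_reals.
Set Implicit Arguments. Unset Strict Implicit. Unset Printing Implicit Defensive.
Import Order.TTheory GRing.Theory Num.Theory.
Local Open Scope ring_scope.
Local Open Scope classical_set_scope.

Section Defs.
Variables (R : realType) (d : nat).

Definition frob (A : 'M[R]_d) : R := Num.sqrt (\sum_i \sum_j A i j ^+ 2).

Definition vnorm2 (v : 'cV[R]_d) : R := Num.sqrt (\sum_i v i 0 ^+ 2).

Definition spec_norm (A : 'M[R]_d) : R :=
  sup [set vnorm2 (A *m v) | v in [set v : 'cV[R]_d | vnorm2 v = 1]].

Fixpoint prodk (W : nat -> 'M[R]_d) (k lo : nat) : 'M[R]_d :=
  match k with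
  | 0 => 1%:M
  | k'.+1 => W (lo + k')%N *m prodk W k' lo
  end.

(* W_{l2:l1} = W_l2 * ... * W_l1, identity if l2 < l1 *)
Definition Wprod (W : nat -> 'M[R]_d) (l2 l1 : nat) : 'M[R]_d :=
  prodk W (l2.+1 - l1)%N l1.

Definition risk (W : nat -> 'M[R]_d) (L : nat) (Phi : 'M[R]_d) : R :=
  2^-1 * frob (Wprod W L 1 - Phi) ^+ 2.

Definition gradR (W : nat -> 'M[R]_d) (L : nat) (Phi : 'M[R]_d) (l : nat)
  : 'M[R]_d :=
  (Wprod W L l.+1)^T *m (Wprod W L 1 - Phi) *m (Wprod W l.-1 1)^T.

End Defs.

(* Main.v *)
Require Import Defs.
From HB Require Import structures.
From mathcomp Require Import all_boot all_order all_algebra.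
From mathcomp Require Import all_classical all_reals.
From mathcomp Require Import ring lra zify.
Import Order.TTheory GRing.Theory Num.Theory.
Local Open Scope ring_scope.

Module Aux.
Set Implicit Arguments. Unset Strict Implicit.
Section S.
Variable R : realType.

Lemma CS n (a b : 'I_n -> R) :
  (\sum_i a i * b i) ^+ 2 <= (\sum_i a i ^+ 2) * (\sum_i b i ^+ 2).
Proof.
set A := \sum_i a i ^+ 2; set B := \sum_i b i ^+ 2; set C := \sum_i a i * b i.
have A0 : 0 <= A by apply: sumr_ge0 => i _; exact: sqr_ge0.
have B0 : 0 <= B by apply: sumr_ge0 => i _; exact: sqr_ge0.
have key : forall t : R, 0 <= B - 2 * t * C + t ^+ 2 * A.
  move=> t; have -> : B - 2 * t * C + t ^+ 2 * A = \sum_i (b i - t * a i) ^+ 2.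
    rewrite /A /B /C mulr_sumr mulr_sumr -!sumrB -big_split /=.
    by apply: eq_bigr => i _; ring.
  by apply: sumr_ge0 => i _; exact: sqr_ge0.
have [A00|Ap] := eqVneq A 0.
  have h : forall t : R, 0 <= B - 2 * t * C by move=> t; have := key t; rewrite A00 mulr0 addr0.
  have -> : C = 0.
    apply/eqP; apply: contraT => Cn.
    have e : 2 * ((B + 1) / (2 * C)) * C = B + 1 by field; rewrite Cn.
    have := h ((B + 1) / (2 * C)); rewrite e; lra.
  by rewrite expr0n /= mulr_ge0.
have Apos : 0 < A by rewrite lt_def Ap A0.
have := key (C / A).
have -> : B - 2 * (C / A) * C + (C / A) ^+ 2 * A = B - C ^+ 2 / A.
  by field.
rewrite subr_ge0 ler_pdivrMr // => h; by rewrite mulrC.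
Qed.
Variable d : nat.
Implicit Types (A B M : 'M[R]_d) (v : 'cV[R]_d).
Definition n2 (v : 'cV[R]_d) : R := \sum_i v i 0 ^+ 2.
Definition FF (M : 'M[R]_d) : R := \sum_i \sum_j M i j ^+ 2.
Definition PB (A : 'M[R]_d) (c : R) := forall v, n2 (A *m v) <= c * n2 v.

Lemma n2_ge0 v : 0 <= n2 v.
Proof. by apply: sumr_ge0 => i _; exact: sqr_ge0. Qed.
Lemma FF_ge0 M : 0 <= FF M.
Proof. by apply: sumr_ge0 => i _; apply: sumr_ge0 => j _; exact: sqr_ge0. Qed.

Lemma vnorm2_sq (v : 'cV[R]_d) : vnorm2 v ^+ 2 = n2 v.
Proof. by rewrite /vnorm2 sqr_sqrtr // n2_ge0. Qed.
Lemma frob_sq M : frob M ^+ 2 = FF M.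
Proof. by rewrite /frob sqr_sqrtr // FF_ge0. Qed.

Lemma n2Z (k : R) v : n2 (k *: v) = k ^+ 2 * n2 v.
Proof. by rewrite /n2 mulr_sumr; apply: eq_bigr => i _; rewrite mxE exprMn. Qed.

Lemma vnorm2Z (k : R) (v : 'cV[R]_d) : vnorm2 (k *: v) = `|k| * vnorm2 v.
Proof. by rewrite /vnorm2 -/(n2 _) n2Z sqrtrM ?sqr_ge0 // sqrtr_sqr. Qed.

Lemma PB_frob A : PB A (FF A).
Proof.
move=> v; rewrite /n2 /FF mulr_suml; apply: ler_sum => i _.
rewrite mxE; exact: CS.
Qed.

Lemma n2_dot v : n2 v = (v^T *m v) 0 0.
Proof. by rewrite /n2 mxE; apply: eq_bigr => i _; rewrite mxE expr2. Qed.

Lemma spec_le A v : vnorm2 (A *m v) <= spec_norm A * vnorm2 v.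
Proof.
have hub : has_ubound [set vnorm2 (A *m v) | v in [set v : 'cV[R]_d | vnorm2 v = 1]]%classic.
  exists (frob A) => x [u /= u1 <-].
  rewrite /vnorm2 /frob -/(n2 _) ler_sqrt ?FF_ge0 //.
  by have := PB_frob A u; rewrite -(vnorm2_sq u) u1 expr1n mulr1.
have [v0|vn0] := eqVneq (vnorm2 v) 0.
  have n0 : n2 v = 0 by rewrite -vnorm2_sq v0 expr0n.
  have := PB_frob A v; rewrite n0 mulr0 => h.
  by rewrite v0 mulr0 /vnorm2 ler0_sqrtr.
have sp : 0 < vnorm2 v by rewrite lt_def vn0 sqrtr_ge0.
set s := vnorm2 v.
have u1 : vnorm2 (s^-1 *: v) = 1.
  by rewrite vnorm2Z gtr0_norm ?invr_gt0 // mulVf.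
have := ub_le_sup hub (ex_intro2 _ _ _ u1 erefl).
rewrite -scalemxAr vnorm2Z gtr0_norm ?invr_gt0 // mulrC ler_pdivrMr //.
Qed.

Lemma PB_spec A a : 0 <= a -> spec_norm A <= a -> PB A (a ^+ 2).
Proof.
move=> a0 h v; rewrite -!vnorm2_sq -exprMn expr2 [X in _ <= X]expr2.
have h1 : vnorm2 (A *m v) <= a * vnorm2 v.
  apply: le_trans (spec_le A v) _; apply: ler_wpM2r => //; exact: sqrtr_ge0.
by apply: ler_pM => //; exact: sqrtr_ge0.
Qed.

Lemma PB_mul A B a b : 0 <= a -> PB A a -> PB B b -> PB (A *m B) (a * b).
Proof.
move=> a0 hA hB v; rewrite -mulmxA; apply: le_trans (hA _) _.
rewrite -mulrA; exact: ler_wpM2l.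
Qed.

Lemma PB_1 : PB 1%:M 1.
Proof. by move=> v; rewrite mul1mx mul1r. Qed.

Lemma PB_tr A c : 0 <= c -> PB A c -> PB A^T c.
Proof.
move=> c0 h v; set u := A^T *m v.
have e : n2 u = \sum_j v j 0 * (A *m u) j 0.
  rewrite n2_dot {1}/u trmx_mul trmxK -mulmxA mxE.
  by apply: eq_bigr => j _; rewrite mxE.
have cs : n2 u ^+ 2 <= n2 v * (c * n2 u).
  rewrite {1}e; apply: le_trans (CS _ _) _; apply: ler_wpM2l; first exact: n2_ge0.
  exact: h.
have [u0|un0] := eqVneq (n2 u) 0.
  by rewrite u0 mulr_ge0 ?n2_ge0.
have up : 0 < n2 u by rewrite lt_def un0 n2_ge0.
move: cs; rewrite expr2 mulrCA mulrA ler_pM2r //.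
Qed.

Lemma FF_tr M : FF M^T = FF M.
Proof. by rewrite /FF exchange_big; apply: eq_bigr => i _; apply: eq_bigr => j _; rewrite mxE. Qed.

Lemma FF_mul A M c : PB A c -> FF (A *m M) <= c * FF M.
Proof.
move=> h; rewrite /FF exchange_big [X in _ <= _ * X]exchange_big mulr_sumr.
apply: ler_sum => j _.
have := h (col j M); rewrite /n2.
have -> : \sum_i (A *m col j M) i 0 ^+ 2 = \sum_i (A *m M) i j ^+ 2.
  apply: eq_bigr => i _; rewrite !mxE; congr (_ ^+ 2); apply: eq_bigr => k _; rewrite !mxE //.
have -> : \sum_i col j M i 0 ^+ 2 = \sum_i M i j ^+ 2.
  by apply: eq_bigr => i _; rewrite mxE.
by [].
Qed.

Lemma PB_prodk (W : nat -> 'M[R]_d) k lo a : 0 <= a ->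
  (forall i, (i < k)%N -> PB (W (lo + i)%N) a) -> PB (prodk W k lo) (a ^+ k).
Proof.
move=> a0; elim: k => [|k IH] h /=; first by rewrite expr0; exact: PB_1.
rewrite exprS; apply: PB_mul => //; first exact: h.
by apply: IH => i ik; apply: h; apply: ltnW.
Qed.
End S.
End Aux.
Import Aux.

Theorem lemma8 (R : realType) (d L : nat) (Phi : 'M[R]_d) (W : nat -> 'M[R]_d)
  (alpha beta phi : R) :
  (1 <= d)%N -> (2 <= L)%N ->
  0 <= alpha -> 0 <= beta -> 0 < phi ->
  (forall l, (1 <= l <= L.-1)%N -> spec_norm (W l) <= alpha) ->
  spec_norm (W L) <= beta ->
  1 <= alpha ^+ (2 * L.-1) -> alpha ^+ (2 * L.-1) < L%:R * phi ^+ 2 ->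
  alpha ^+ (2 * L.-1) * beta ^+ 2 < 2 * phi ^+ 2 ->
  (forall l, (1 <= l <= L.-1)%N ->
     frob (gradR W L Phi l) ^+ 2 <= 4 * phi ^+ 2 * risk W L Phi) /\
  frob (gradR W L Phi L) ^+ 2 <= 2 * L%:R * phi ^+ 2 * risk W L Phi.
Proof.
move=> _ L2 a0 b0 p0 hW hWL a1 aL ab.
set E := Wprod W L 1 - Phi.
have rE : risk W L Phi = 2^-1 * FF E by rewrite /risk frob_sq.
have a20 : 0 <= alpha ^+ 2 by exact: sqr_ge0.
have key : forall l cX cY, 0 <= cX -> 0 <= cY ->
    PB (Wprod W L l.+1) cX -> PB (Wprod W l.-1 1) cY ->
    frob (gradR W L Phi l) ^+ 2 <= cX * cY * (2 * risk W L Phi).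
  move=> l cX cY cX0 cY0 hX hY.
  rewrite frob_sq rE.
  have -> : cX * cY * (2 * (2^-1 * FF E)) = cX * (cY * FF E) by field.
  rewrite /gradR -mulmxA; apply: le_trans (FF_mul _ (PB_tr cX0 hX)) _.
  rewrite ler_wpM2l // -FF_tr trmx_mul trmxK.
  apply: le_trans (FF_mul _ hY) _; by rewrite FF_tr.
have hY : forall l, (1 <= l <= L)%N -> PB (Wprod W l.-1 1) ((alpha ^+ 2) ^+ l.-1).
  move=> l /andP [l1 lL]; rewrite /Wprod prednK // subn1 /=.
  apply: PB_prodk => // i il; apply: PB_spec => //; apply: hW; lia.
have a1' : 1 <= alpha ^+ 2.
  rewrite leNgt; apply/negP => h; move: a1; rewrite exprM leNgt exprn_ilt1 //.
  by rewrite -lt0n; lia.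
have r0 : 0 <= risk W L Phi by rewrite rE mulr_ge0 ?invr_ge0 ?FF_ge0.
set a2 := alpha ^+ 2.
have eA : alpha ^+ (2 * L.-1) = a2 ^+ (L.-1.-1) * a2.
  by rewrite exprM -exprSr; congr (_ ^+ _); lia.
have p2 : 0 <= a2 ^+ (L.-1.-1) by exact: exprn_ge0.
split.
- move=> l /andP [l1 lL].
  have hX : PB (Wprod W L l.+1) (beta ^+ 2 * a2 ^+ (L - l.+1)).
    rewrite /Wprod.
    have -> : (L.+1 - l.+1 = (L - l.+1).+1)%N by lia.
    rewrite /=.
    have -> : (l.+1 + (L - l.+1) = L)%N by lia.
    apply: PB_mul; [exact: sqr_ge0 | exact: PB_spec | ].
    apply: PB_prodk => // i il; apply: PB_spec => //; apply: hW; lia.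
  apply: le_trans (key _ _ _ _ _ hX (hY l _)) _.
  + by rewrite mulr_ge0 ?sqr_ge0 ?exprn_ge0.
  + exact: exprn_ge0.
  + by rewrite l1 /=; lia.
  have c : beta ^+ 2 * a2 ^+ (L - l.+1) * a2 ^+ l.-1 <= 2 * phi ^+ 2.
    rewrite -mulrA -exprD.
    have -> : (L - l.+1 + l.-1 = L.-1.-1)%N by lia.
    apply: le_trans (ltW ab); rewrite eA mulrC ler_wpM2r ?sqr_ge0 //.
    by rewrite ler_peMr.
  move: c r0; set C := beta ^+ 2 * _ * _; set r := risk W L Phi; set P := phi ^+ 2.
  by move=> c r0; nra.
- have hX : PB (Wprod W L L.+1) 1 by rewrite /Wprod subnn /=; exact: PB_1.
  apply: le_trans (key _ _ _ _ _ hX (hY L _)) _.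
  + by [].
  + exact: exprn_ge0.
  + by rewrite leqnn andbT; lia.
  rewrite mul1r -exprM.
  move: (ltW aL) r0; set C := alpha ^+ _; set r := risk W L Phi; set P := phi ^+ 2.
  by move=> c r0; nra.
Qed.
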